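(* Let $a_1, \dots, a_n \in \mathbb{Z}^d$ be pairwise distinct primitive integer vectors, let $D \subseteq (0,\infty)$ be a dense subset, and for each $w \in \mathbb{Z}^d$ let $f_w : \mathbb{R} \to \mathbb{R}$ be a function. Then there is at most one tuple of real numbers $(b_1, \dots, b_n)$ such that: $P = \bigcap_{i=1}^n \{x \in \mathbb{R}^d : \langle a_i, x\rangle \le b_i\}$ is a full-dimensional polytope; $f_w(s) = L_{P+w}(s)$ for all $w \in \mathbb{Z}^d$ and all $s \in D$; and for each $i$ the set $F_i = P \cap \{x : \langle a_i, x\rangle = b_i\}$ is a nonempty face of $P$.
   Context: For a polytope $P \subseteq \mathbb{R}^d$ and real $s \ge 0$, $L_P(s) = \#(sP \cap \mathbb{Z}^d)$, where $sP = \{sx : x \in P\}$. A vector $a \in \mathbb{Z}^d$ is primitive if the greatest common divisor of its coordinates is $1$. *)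

(* Defs.v *)
From Stdlib Require Import Reals ZArith List.
Open Scope R_scope.

(* Vectors in R^d / Z^d are functions nat -> R / nat -> Z of which only the
   coordinates k < d are meaningful. Subsets of R^d are predicates. *)
Definition vecR := nat -> R.
Definition vecZ := nat -> Z.

Fixpoint ip (d : nat) (a x : vecR) : R :=
  match d with
  | O => 0
  | S k => ip k a x + a k * x k
  end.

Definition toR (z : vecZ) : vecR := fun k => IZR (z k).

(* canonical representative of an element of Z^d: zero outside coordinates < d *)
Definition canonZ (d : nat) (z : vecZ) : Prop := forall k, (d <= k)%nat -> z k = 0%Z.

Fixpoint vgcd (d : nat) (a : vecZ) : Z :=
  match d with
  | O => 0%Z
  | S k => Z.gcd (vgcd k a) (a k)
  end.

Definition primitive_vec (d : nat) (a : vecZ) : Prop := vgcd d a = 1%Z.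

Definition in_conv_hull (d : nat) (pts : list vecR) (x : vecR) : Prop :=
  exists lam : list R,
    length lam = length pts /\
    Forall (fun l => 0 <= l) lam /\
    fold_right Rplus 0 lam = 1 /\
    forall k, (k < d)%nat ->
      x k = fold_right Rplus 0 (map (fun p => fst p * (snd p) k) (combine lam pts)).

Definition is_polytope (d : nat) (P : vecR -> Prop) : Prop :=
  exists pts : list vecR,
    forall x, P x <-> in_conv_hull d pts x.

Definition full_dim (d : nat) (P : vecR -> Prop) : Prop :=
  exists (x0 : vecR) (r : R), 0 < r /\
    forall y : vecR, (forall k, (k < d)%nat -> Rabs (y k - x0 k) < r) -> P y.

Definition is_face (d : nat) (P F : vecR -> Prop) : Prop :=
  exists (c : vecR) (delta : R),
    (forall x, P x -> ip d c x <= delta) /\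
    (forall x, F x <-> (P x /\ ip d c x = delta)).

Definition scale (d : nat) (s : R) (P : vecR -> Prop) : vecR -> Prop :=
  fun y => exists x, P x /\ forall k, (k < d)%nat -> y k = s * x k.

Definition translate (d : nat) (P : vecR -> Prop) (w : vecZ) : vecR -> Prop :=
  fun y => exists x, P x /\ forall k, (k < d)%nat -> y k = x k + IZR (w k).

(* lattice_count d P s N :  L_P(s) = #(sP ∩ Z^d) = N *)
Definition lattice_count (d : nat) (P : vecR -> Prop) (s : R) (N : nat) : Prop :=
  exists l : list vecZ,
    NoDup l /\ length l = N /\
    forall z, In z l <-> (canonZ d z /\ scale d s P (toR z)).

Definition Hpoly (d n : nat) (a : nat -> vecZ) (b : nat -> R) : vecR -> Prop :=
  fun x => forall i, (i < n)%nat -> ip d (toR (a i)) x <= b i.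

Definition facet_set (d n : nat) (a : nat -> vecZ) (b : nat -> R) (i : nat) : vecR -> Prop :=
  fun x => Hpoly d n a b x /\ ip d (toR (a i)) x = b i.

Definition admissible (d n : nat) (a : nat -> vecZ) (D : R -> Prop)
    (f : vecZ -> R -> R) (b : nat -> R) : Prop :=
  is_polytope d (Hpoly d n a b) /\
  full_dim d (Hpoly d n a b) /\
  (forall w : vecZ, canonZ d w -> forall s, D s ->
     exists N, lattice_count d (translate d (Hpoly d n a b) w) s N /\ f w s = INR N) /\
  (forall i, (i < n)%nat ->
     is_face d (Hpoly d n a b) (facet_set d n a b i) /\
     exists x, facet_set d n a b i x).

(* Main.v *)
Require Import Defs.
From Stdlib Require Import Reals ZArith List Lra Lia.
Open Scope R_scope.

Lemma ip_ext d a x y : (forall k, (k < d)%nat -> x k = y k) -> ip d a x = ip d a y.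
Proof.
  induction d; simpl; intros H; auto.
  rewrite IHd by (intros; apply H; lia). rewrite (H d) by lia. reflexivity.
Qed.

Lemma ip_lin d a x y p q :
  ip d a (fun k => p * x k + q * y k) = p * ip d a x + q * ip d a y.
Proof. induction d; simpl; [ring|]. rewrite IHd. ring. Qed.

Lemma ip_nonneg d f : (forall k, 0 <= f k) -> 0 <= ip d f (fun _ => 1).
Proof. intros H; induction d; simpl; [lra|]. specialize (H d). lra. Qed.

Lemma ip_ge_coord d f k : (forall k, 0 <= f k) -> (k < d)%nat -> f k <= ip d f (fun _ => 1).
Proof.
  intros H; induction d; intros Hk; [lia|]. simpl.
  destruct (Nat.eq_dec k d) as [->|Hne].
  - pose proof (ip_nonneg d f H). lra.
  - assert (f k <= ip d f (fun _ => 1)) by (apply IHd; lia). specialize (H d). lra.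
Qed.

Lemma ip_diff d a x y e :
  (forall k, (k < d)%nat -> Rabs (x k - y k) <= e) ->
  Rabs (ip d a x - ip d a y) <= e * ip d (fun k => Rabs (a k)) (fun _ => 1).
Proof.
  induction d; simpl; intros H.
  - rewrite Rminus_diag, Rabs_R0. lra.
  - replace (ip d a x + a d * x d - (ip d a y + a d * y d))
      with ((ip d a x - ip d a y) + a d * (x d - y d)) by ring.
    eapply Rle_trans; [apply Rabs_triang|].
    rewrite Rabs_mult.
    assert (H1 := IHd (fun k Hk => H k ltac:(lia))).
    assert (H2 := H d ltac:(lia)).
    assert (0 <= Rabs (a d)) by apply Rabs_pos.
    assert (Rabs (a d) * Rabs (x d - y d) <= Rabs (a d) * e) by (apply Rmult_le_compat_l; auto).
    lra.
Qed.

Definition Bk (pts : list vecR) (k : nat) : R :=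
  fold_right (fun p acc => Rabs (p k) + acc) 0 pts.

Lemma Bk_nonneg pts k : 0 <= Bk pts k.
Proof. induction pts; simpl; [lra|]. pose proof (Rabs_pos (a k)). lra. Qed.

Lemma Bk_in pts k p : In p pts -> Rabs (p k) <= Bk pts k.
Proof.
  induction pts; simpl; [tauto|]. intros [->|H].
  - pose proof (Bk_nonneg pts k). lra.
  - pose proof (IHpts H). pose proof (Rabs_pos (a k)). lra.
Qed.

Lemma hull_bound (k : nat) C : forall (lam : list R) (pts : list vecR),
  0 <= C -> (forall p, In p pts -> Rabs (p k) <= C) -> Forall (fun l => 0 <= l) lam ->
  Rabs (fold_right Rplus 0 (map (fun p => fst p * (snd p) k) (combine lam pts)))
   <= fold_right Rplus 0 lam * C.
Proof.
  induction lam as [|l lam IH]; intros pts HC Hp Hl; simpl.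
  - rewrite Rabs_R0. lra.
  - inversion Hl; subst. destruct pts as [|p pts]; simpl.
    + rewrite Rabs_R0.
      assert (0 <= fold_right Rplus 0 lam).
      { clear -H2. induction lam; simpl; [lra|]. inversion H2; subst. specialize (IHlam H3). lra. }
      apply Rmult_le_pos; lra.
    + eapply Rle_trans; [apply Rabs_triang|].
      rewrite Rabs_mult, (Rabs_pos_eq l) by auto.
      assert (Rabs (p k) <= C) by (apply Hp; simpl; auto).
      assert (l * Rabs (p k) <= l * C) by (apply Rmult_le_compat_l; auto).
      assert (H3 := IH pts HC (fun q Hq => Hp q (or_intror Hq)) H2). lra.
Qed.

Lemma bounded d P : is_polytope d P ->
  exists M, 0 <= M /\ forall x, P x -> forall k, (k < d)%nat -> Rabs (x k) <= M.
Proof.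
  intros [pts H]. exists (ip d (Bk pts) (fun _ => 1)). split.
  - apply ip_nonneg, Bk_nonneg.
  - intros x Hx k Hk. apply H in Hx. destruct Hx as [lam [Hlen [Hnn [Hsum Hco]]]].
    rewrite Hco by auto.
    eapply Rle_trans; [apply (hull_bound k (Bk pts k)); auto|].
    + apply Bk_nonneg.
    + intros; apply Bk_in; auto.
    + rewrite Hsum, Rmult_1_l. apply ip_ge_coord; auto. intros; apply Bk_nonneg.
Qed.

Lemma int_small m : Rabs (IZR m) < 1 -> m = 0%Z.
Proof. intros H. rewrite <- abs_IZR in H. apply lt_IZR in H. lia. Qed.

Lemma half (d n : nat) (a : nat -> vecZ) D
  (HD_pos : forall s, D s -> 0 < s)
  (HD_dense : forall u v, 0 <= u -> u < v -> exists s, D s /\ u < s /\ s < v)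
  f b b' :
  admissible d n a D f b -> admissible d n a D f b' ->
  forall i, (i < n)%nat -> b' i <= b i.
Proof.
  intros [Hpol [_ [Hcnt _]]] [Hpol' [Hfd' [Hcnt' Hface']]] i Hi.
  destruct (Rle_or_lt (b' i) (b i)) as [|Hlt]; auto. exfalso.
  destruct (Hface' i Hi) as [_ [x' [Hx'P Hx'eq]]].
  destruct Hfd' as [x0 [r [Hr Hball]]].
  set (P := Hpoly d n a b) in *. set (P' := Hpoly d n a b') in *.
  assert (Hx0 : P' x0).
  { apply Hball. intros. rewrite Rminus_diag, Rabs_R0. auto. }
  set (g := ip d (toR (a i))).
  assert (Hgx0 : g x0 <= b' i) by (apply Hx0; auto).
  set (e := b' i - b i). set (K := b' i - g x0).
  set (t := e / (2 * (e + K))).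
  assert (He : 0 < e) by (unfold e; lra).
  assert (HK : 0 <= K) by (unfold K; lra).
  assert (Ht : 0 < t) by (unfold t; apply Rdiv_lt_0_compat; lra).
  assert (Ht1 : t < 1).
  { unfold t. apply (Rmult_lt_reg_r (2 * (e+K))); [lra|].
    unfold Rdiv; rewrite Rmult_assoc, Rinv_l by lra. lra. }
  set (y := fun k => (1 - t) * x' k + t * x0 k).
  assert (Hgy : g y = (1 - t) * b' i + t * g x0).
  { unfold g, y. rewrite ip_lin. fold (g x'). fold (g x0). unfold g. rewrite Hx'eq. ring. }
  set (m := g y - b i).
  assert (Hm : 0 < m).
  { unfold m. rewrite Hgy.
    assert (e - t * K = e * (2 * e + K) / (2 * (e + K))) by (unfold t; field; lra).
    assert (0 < e * (2 * e + K) / (2 * (e + K))).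
    { apply Rdiv_lt_0_compat; [apply Rmult_lt_0_compat|]; lra. }
    unfold K, e in *. lra. }
  assert (Hint : forall v, (forall k, (k < d)%nat -> Rabs (v k - y k) < t * r) -> P' v).
  { intros v Hv.
    set (x0' := fun k => (v k - (1 - t) * x' k) / t).
    assert (Hx0' : P' x0').
    { apply Hball. intros k Hk.
      assert (E : x0' k - x0 k = (v k - y k) * / t) by (unfold x0', y; field; lra).
      rewrite E, Rabs_mult, (Rabs_pos_eq (/ t)) by (left; apply Rinv_0_lt_compat; lra).
      apply (Rmult_lt_reg_r t); auto. rewrite Rmult_assoc, Rinv_l by lra.
      specialize (Hv k Hk). lra. }
    intros j Hj.
    rewrite (ip_ext d _ v (fun k => (1 - t) * x' k + t * x0' k)).
    - rewrite ip_lin. specialize (Hx'P j Hj). specialize (Hx0' j Hj).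
      assert ((1 - t) * ip d (toR (a j)) x' <= (1 - t) * b' j) by (apply Rmult_le_compat_l; lra).
      assert (t * ip d (toR (a j)) x0' <= t * b' j) by (apply Rmult_le_compat_l; lra).
      lra.
    - intros k _. unfold x0'. field. lra. }
  destruct (bounded d P Hpol) as [M1 [HM1 HB1]].
  destruct (bounded d P' Hpol') as [M2 [HM2 HB2]].
  set (M := M1 + M2).
  set (S := ip d (fun k => Rabs (toR (a i) k)) (fun _ => 1)).
  assert (HS : 0 <= S) by (apply ip_nonneg; intros; apply Rabs_pos).
  set (dl := Rmin (t * r) (m / (S + 1))).
  assert (Hdl : 0 < dl).
  { unfold dl. apply Rmin_pos; [apply Rmult_lt_0_compat|apply Rdiv_lt_0_compat]; lra. }
  set (Nz := up (2 * M)).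
  destruct (archimed (2 * M)) as [HN1 _].
  fold Nz in HN1.
  assert (HNpos : 1 <= IZR Nz).
  { assert (0 < IZR Nz) by (unfold M in *; lra).
    apply lt_0_IZR in H. apply IZR_le. lia. }
  destruct (HD_dense (/ (IZR Nz + dl)) (/ IZR Nz)) as [s [Ds [Hs1 Hs2]]].
  { left; apply Rinv_0_lt_compat; lra. }
  { apply Rinv_lt_contravar; [apply Rmult_lt_0_compat|]; lra. }
  assert (Hs : 0 < s) by (apply HD_pos; auto).
  set (th := / s - IZR Nz).
  assert (Hth : 0 < th).
  { unfold th. assert (/ / IZR Nz < / s).
    { apply Rinv_lt_contravar; auto. apply Rmult_lt_0_compat; auto.
      apply Rinv_0_lt_compat; lra. }
    rewrite Rinv_inv in H. lra. }
  assert (Hthd : th < dl).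
  { unfold th. assert (/ s < / / (IZR Nz + dl)).
    { apply Rinv_lt_contravar; auto. apply Rmult_lt_0_compat; auto.
      apply Rinv_0_lt_compat; lra. }
    rewrite Rinv_inv in H. lra. }
  assert (HsM : 2 * M * s < 1).
  { assert (s * IZR Nz < 1).
    { apply (Rmult_lt_compat_r (IZR Nz)) in Hs2; [|lra].
      rewrite Rinv_l in Hs2 by lra. auto. }
    assert (2 * M * s < IZR Nz * s) by (apply Rmult_lt_compat_r; lra). lra. }
  set (uz := fun k => if (k <? d)%nat then (up (y k / th) - 1)%Z else 0%Z).
  set (wz := fun k => if (k <? d)%nat then (uz k * Nz)%Z else 0%Z).
  set (z := fun k => IZR (uz k) / s - IZR (wz k)).
  assert (Hzk : forall k, (k < d)%nat -> z k = IZR (up (y k / th) - 1) * th).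
  { intros k Hk. unfold z, wz, uz. destruct (Nat.ltb_spec k d); [|lia].
    rewrite mult_IZR. unfold th. field. lra. }
  assert (Happ : forall k, (k < d)%nat -> Rabs (z k - y k) < dl).
  { intros k Hk. rewrite Hzk by auto. rewrite minus_IZR.
    destruct (archimed (y k / th)) as [A1 A2].
    assert (E : y k = (y k / th) * th) by (field; lra).
    set (q := y k / th) in *. set (U := IZR (up q)) in *.
    apply Rabs_def1.
    - rewrite E. assert ((U - 1) * th - q * th = (U - 1 - q) * th) by ring.
      assert ((U - 1 - q) * th <= 0 * th) by (apply Rmult_le_compat_r; lra). lra.
    - rewrite E. assert ((U - 1 - q) * th > (-1) * th) by (apply Rmult_lt_compat_r; lra).
      lra. }
  assert (HzP : P' z).
  { apply Hint. intros k Hk. specialize (Happ k Hk).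
    assert (dl <= t * r) by apply Rmin_l. lra. }
  assert (Hgz : b i < g z).
  { assert (H1 := ip_diff d (toR (a i)) z y dl (fun k Hk => Rlt_le _ _ (Happ k Hk))).
    fold S in H1. fold (g z) (g y) in H1.
    assert (dl <= m / (S + 1)) by apply Rmin_r.
    assert (dl * S <= m / (S + 1) * S) by (apply Rmult_le_compat_r; auto).
    assert (m / (S + 1) * S = m - m / (S + 1)) by (field; lra).
    assert (0 < m / (S + 1)) by (apply Rdiv_lt_0_compat; lra).
    assert (Hr1 := Rle_abs (g y - g z)). rewrite Rabs_minus_sym in Hr1. unfold m in *. lra. }
  assert (Hcw : canonZ d wz).
  { intros k Hk. unfold wz. destruct (Nat.ltb_spec k d); auto; lia. }
  destruct (Hcnt wz Hcw s Ds) as [N [[l [_ [HlN Hl]]] HfN]].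
  destruct (Hcnt' wz Hcw s Ds) as [N' [[l' [_ [HlN' Hl']]] HfN']].
  assert (Hin : In uz l').
  { apply Hl'. split.
    - intros k Hk. unfold uz. destruct (Nat.ltb_spec k d); auto; lia.
    - exists (fun k => z k + IZR (wz k)). split.
      + exists z. split; auto.
      + intros k Hk. unfold toR, z. field. lra. }
  assert (Hnil : l = nil).
  { destruct l as [|z' l]; auto. exfalso.
    destruct (proj1 (Hl z') (or_introl eq_refl)) as [_ [x1 [[x2 [Hx2 Hx12]] Hx1]]].
    assert (Heq : forall k, (k < d)%nat -> x2 k = z k).
    { intros k Hk.
      assert (E : IZR (z' k - uz k) = s * (x2 k - z k)).
      { rewrite minus_IZR. specialize (Hx1 k Hk). unfold toR in Hx1. rewrite Hx1, Hx12 by auto.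
        unfold z. field. lra. }
      assert (Hb1 := HB1 x2 Hx2 k Hk). assert (Hb2 := HB2 z HzP k Hk).
      assert (Rabs (IZR (z' k - uz k)) < 1).
      { rewrite E, Rabs_mult, (Rabs_pos_eq s) by lra.
        assert (Rabs (x2 k - z k) <= Rabs (x2 k) + Rabs (z k)).
        { unfold Rminus. rewrite <- (Rabs_Ropp (z k)). apply Rabs_triang. }
        assert (s * Rabs (x2 k - z k) <= s * (2 * M)) by (apply Rmult_le_compat_l; unfold M; lra).
        lra. }
      apply int_small in H. rewrite H in E. simpl in E.
      assert (x2 k - z k = 0).
      { destruct (Rmult_integral _ _ (eq_sym E)); lra. }
      lra. }
    specialize (Hx2 i Hi). rewrite (ip_ext d _ x2 z Heq) in Hx2. fold (g z) in Hx2. lra. }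
  subst l. simpl in HlN. subst N.
  destruct l' as [|u l']; [contradiction|]. simpl in HlN'. subst N'.
  rewrite HfN in HfN'. apply INR_eq in HfN'. discriminate.
Qed.

Theorem theorem4p3 (d n : nat) (a : nat -> vecZ)
  (Ha_prim : forall i, (i < n)%nat -> primitive_vec d (a i))
  (Ha_dist : forall i j, (i < n)%nat -> (j < n)%nat -> i <> j ->
               exists k, (k < d)%nat /\ a i k <> a j k)
  (D : R -> Prop)
  (HD_pos : forall s, D s -> 0 < s)
  (HD_dense : forall u v, 0 <= u -> u < v -> exists s, D s /\ u < s /\ s < v)
  (f : vecZ -> R -> R)
  (b b' : nat -> R) :
  admissible d n a D f b -> admissible d n a D f b' ->
  forall i, (i < n)%nat -> b i = b' i.
Proof.
  intros H H' i Hi. apply Rle_antisym.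
  - apply (half d n a D HD_pos HD_dense f b' b); auto.
  - apply (half d n a D HD_pos HD_dense f b b'); auto.
Qed.
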